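(* Let $b\in\mathbb R$, $\omega>0$, $\mathcal B>0$, $y\in\mathbb R^2\setminus\{0\}$, $\eta\in\mathbb R^2$ with $y\wedge\eta\ne b$, and let $Z(t,y,\eta)=\xi^t_\eta-i\mathcal B\,x^t_\eta$. Then $Z$ is a non-degenerate matrix-function for all $t\ge0$. Moreover $$\det Z=\Big(\cos(\omega t)-i\mathcal B\omega^{-1}\sin(\omega t)\Big)^2-b^2\omega^{-2}|x^t|^{-4}\sin^2(\omega t),$$ and the eigenvalues of $Z$ are $$\mu_{1,2}=\cos(\omega t)-i\mathcal B\omega^{-1}\sin(\omega t)\pm b\,\omega^{-1}|x^t|^{-2}\sin(\omega t).$$
   Context: $A(x)=\big(-b\,x_2/|x|^2,\ b\,x_1/|x|^2\big)$ for $x\ne0$; $u\wedge v=u_1v_2-u_2v_1$. $(x^t,\xi^t)=(x^t(y,\eta),\xi^t(y,\eta))$ is the solution of Hamilton's equations for $h(x,\xi)=\frac12|\xi-A(x)|^2+\frac{\omega^2}{2}|x|^2$: $\dot x^t=\xi^t-A(x^t)$, $\dot\xi^t=-h_x(x^t,\xi^t)$, $x^0=y$, $\xi^0=\eta$; explicitly (the trajectory never meets the origin since $y\wedge\eta\ne b$) $x^t=\cos(\omega t)y+\frac{\sin(\omega t)}{\omega}(\eta-A(y))$, $\xi^t=\dot x^t+A(x^t)$. Here $x^t_\eta,\xi^t_\eta$ denote the $2\times2$ Jacobian matrices with respect to $\eta$. *)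

(* Defs.v *)
From HB Require Import structures.
From mathcomp Require Import all_boot all_order all_algebra.
From mathcomp Require Import all_classical all_reals all_analysis.
From mathcomp Require Import complex.
Set Implicit Arguments. Unset Strict Implicit. Unset Printing Implicit Defensive.
Import Order.TTheory GRing.Theory Num.Theory.
Import numFieldNormedType.Exports.
Local Open Scope ring_scope.

Section Defs.
Variable R : realType.

Definition vec2 (a c : R) : 'rV[R]_2 :=
  \row_(j < 2) (if val j == 0%N then a else c).

Definition sqnorm2 (x : 'rV[R]_2) : R := x 0 0 ^+ 2 + x 0 1 ^+ 2.

Definition wedge (u v : 'rV[R]_2) : R := u 0 0 * v 0 1 - u 0 1 * v 0 0.

Definition Apot (b : R) (x : 'rV[R]_2) : 'rV[R]_2 :=
  vec2 (- b * x 0 1 / sqnorm2 x) (b * x 0 0 / sqnorm2 x).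

Definition xt (b w : R) (y eta : 'rV[R]_2) (t : R) : 'rV[R]_2 :=
  cos (w * t) *: y + (sin (w * t) / w) *: (eta - Apot b y).

Definition xit (b w : R) (y eta : 'rV[R]_2) (t : R) : 'rV[R]_2 :=
  'D_1 (xt b w y eta) t + Apot b (xt b w y eta t).

(* Jacobian matrix (d f_i / d eta_j) of f : R^2 -> R^2 at eta *)
Definition jac (f : 'rV[R]_2 -> 'rV[R]_2) (eta : 'rV[R]_2) : 'M[R]_2 :=
  \matrix_(i < 2, j < 2) ('D_(delta_mx 0 j) f eta) 0 i.

Definition cplxmx (M : 'M[R]_2) : 'M[R[i]]_2 := map_mx (fun r => (r%:C)%C) M.

Definition Zmat (b w B : R) (y eta : 'rV[R]_2) (t : R) : 'M[R[i]]_2 :=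
  cplxmx (jac (fun e => xit b w y e t) eta)
  - ('i%C * (B%:C)%C) *: cplxmx (jac (fun e => xt b w y e t) eta).

End Defs.

(* Main.v *)
Require Import Defs.
From HB Require Import structures.
From mathcomp Require Import all_boot all_order all_algebra.
From mathcomp Require Import all_classical all_reals all_analysis.
From mathcomp Require Import complex.
From mathcomp Require Import ring lra.
Import Order.TTheory GRing.Theory Num.Theory.
Import numFieldNormedType.Exports.
Local Open Scope ring_scope.

Lemma det2 (F : comNzRingType) (M : 'M[F]_2) : \det M = M 0 0 * M 1 1 - M 0 1 * M 1 0.
Proof.
rewrite (expand_det_row _ 0) !big_ord_recl big_ord0 /cofactor !det_mx11 !mxE /=.
rewrite /= expr0 mul1r addr0 expr1 mulN1r mulrN.
have -> : lift 0 0 = 1 :> 'I_2 by apply/val_inj.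
by have -> : lift 1 0 = 0 :> 'I_2 by apply/val_inj.
Qed.

Section DirRed.
Local Open Scope classical_set_scope.
Context {R : realType} {V W : normedModType R}.

Lemma derive_dir (f : V -> W) a v :
  'D_v f a = 'D_1 (fun h : R => f (h *: v + a)) 0.
Proof.
have E : (fun h : R => h^-1 *: ((f \o shift a) (h *: v) - f a)) =
  (fun h : R => h^-1 *: (((fun h0 : R => f (h0 *: v + a)) \o shift 0) (h *: 1)
     - (fun h0 : R => f (h0 *: v + a)) 0)).
  by apply/funext => h /=; rewrite /shift /= addr0 scale0r add0r [h *: 1]mulr1.
by rewrite /derive E.
Qed.

Lemma derivable_dir (f : V -> W) a v :
  derivable f a v = derivable (fun h : R => f (h *: v + a)) 0 1.
Proof.
have E : (fun h : R => h^-1 *: ((f \o shift a) (h *: v) - f a)) =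
  (fun h : R => h^-1 *: (((fun h0 : R => f (h0 *: v + a)) \o shift 0) (h *: 1)
     - (fun h0 : R => f (h0 *: v + a)) 0)).
  by apply/funext => h /=; rewrite /shift /= addr0 scale0r add0r [h *: 1]mulr1.
by rewrite /derivable E.
Qed.

Lemma is_derive_dir (f : V -> W) (a v : V) (d : W) :
  is_derive (0:R) (1:R) (fun h : R => f (h *: v + a)) d -> is_derive a v f d.
Proof.
move=> [H1 H2]; split; first by rewrite derivable_dir.
by rewrite derive_dir.
Qed.
End DirRed.

Lemma is_derive_mx {R : realType} {V : normedModType R} {m n : nat}
  (M : V -> 'M[R]_(m, n)) t v (D : 'M[R]_(m, n)) :
  (forall i j, is_derive t v (fun x => M x i j) (D i j)) -> is_derive t v M D.
Proof.
move=> H; have dM : derivable M t v.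
  by apply/derivable_mxP => i j; case: (H i j).
split => //; rewrite derive_mx //; apply/matrixP => i j; rewrite mxE.
by case: (H i j).
Qed.

Section D1.
Context {R : realType}.
Implicit Types (f g : R -> R) (x a k df dg : R).

Lemma pp_dlin a k x : is_derive x (1:R) (fun h : R => a + h * k) k.
Proof.
have -> : (fun h : R => a + h * k) = cst a + k \*: id.
  by apply/funext => h /=; rewrite mulrC.
have := (is_deriveD (is_derive_cst a x (1:R)) (is_deriveZ k (is_derive_id x (1:R)))).
by move=> H; apply: is_derive_eq H _; rewrite add0r /GRing.scale /= mulr1.
Qed.

Lemma pp_dadd f g x df dg : is_derive x (1:R) f df -> is_derive x (1:R) g dg ->
  is_derive x (1:R) (fun h => f h + g h) (df + dg).
Proof. move=> Hf Hg; exact: (is_deriveD Hf Hg). Qed.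

Lemma pp_dmul f g x df dg : is_derive x (1:R) f df -> is_derive x (1:R) g dg ->
  is_derive x (1:R) (fun h => f h * g h) (f x * dg + g x * df).
Proof. move=> Hf Hg; exact: (is_deriveM Hf Hg). Qed.

Lemma pp_dscal k f x df : is_derive x (1:R) f df ->
  is_derive x (1:R) (fun h => k * f h) (k * df).
Proof. move=> Hf; exact: (is_deriveZ k Hf). Qed.

Lemma pp_dinv f x df : f x != 0 -> is_derive x (1:R) f df ->
  is_derive x (1:R) (fun h => (f h)^-1) (- df / (f x) ^+ 2).
Proof.
move=> fx Hf; have H := is_deriveV fx Hf; apply: is_derive_eq H _.
by rewrite /GRing.scale /= mulrC mulNr mulrN.
Qed.

Lemma pp_dcst a x : is_derive x (1:R) (fun _ : R => a) 0.
Proof. exact: is_derive_cst. Qed.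

Lemma pp_dcos w x : is_derive x (1:R) (fun h => cos (w * h)) (- sin (w * x) * w).
Proof.
have H : is_derive x (1:R) (fun h : R => 0 + h * w) w by exact: pp_dlin.
have -> : (fun h => cos (w * h)) = cos \o (fun h : R => 0 + h * w).
  by apply/funext => h /=; rewrite add0r mulrC.
have H2 := is_derive1_comp (is_derive_cos _) H; apply: is_derive_eq H2 _.
by rewrite add0r [x * w]mulrC.
Qed.

Lemma pp_dsin w x : is_derive x (1:R) (fun h => sin (w * h)) (cos (w * x) * w).
Proof.
have H : is_derive x (1:R) (fun h : R => 0 + h * w) w by exact: pp_dlin.
have -> : (fun h => sin (w * h)) = sin \o (fun h : R => 0 + h * w).
  by apply/funext => h /=; rewrite add0r mulrC.
have H2 := is_derive1_comp (is_derive_sin _) H; apply: is_derive_eq H2 _.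
by rewrite add0r [x * w]mulrC.
Qed.
End D1.
Arguments pp_dadd {R f g x df dg}.
Arguments pp_dmul {R f g x df dg}.
Arguments pp_dscal {R} k {f x df}.
Arguments pp_dinv {R f x df}.

Section D2.
Context {R : realType}.

Definition DAv (b : R) (x u : 'rV[R]_2) : 'rV[R]_2 :=
  let r := sqnorm2 x in let q := 2 * (x 0 0 * u 0 0 + x 0 1 * u 0 1) in
  vec2 ((- b * u 0 1 * r + b * x 0 1 * q) / r ^+ 2)
       ((b * u 0 0 * r - b * x 0 0 * q) / r ^+ 2).

Lemma dApot (b : R) (x u : 'rV[R]_2) (j : 'I_2) : sqnorm2 x != 0 ->
  is_derive (0:R) (1:R) (fun h : R => Apot b (x + h *: u) 0 j) (DAv b x u 0 j).
Proof.
move=> xn0.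
have Hq := pp_dadd (pp_dmul (pp_dlin (x 0 0) (u 0 0) 0) (pp_dlin (x 0 0) (u 0 0) 0))
                (pp_dmul (pp_dlin (x 0 1) (u 0 1) 0) (pp_dlin (x 0 1) (u 0 1) 0)).
pose qf := (fun h : R => (x 0 0 + h * u 0 0) * (x 0 0 + h * u 0 0) +
       (x 0 1 + h * u 0 1) * (x 0 1 + h * u 0 1)).
have qn0 : qf 0 != 0.
  by rewrite /qf !mul0r !addr0 -!expr2.
have Hi := pp_dinv qn0 Hq.
case: j => [[|[|k]]] Hj //=.
- have H := pp_dmul (pp_dscal (- b) (pp_dlin (x 0 1) (u 0 1) 0)) Hi.
  have -> : (fun h : R => Apot b (x + h *: u) 0 (Ordinal Hj)) =
    (fun h => (- b * (x 0 1 + h * u 0 1)) *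
      ((x 0 0 + h * u 0 0) * (x 0 0 + h * u 0 0) +
       (x 0 1 + h * u 0 1) * (x 0 1 + h * u 0 1))^-1).
    apply/funext => h; rewrite /Apot /vec2 /sqnorm2 !mxE /=.
    by rewrite -!expr2.
  refine (is_derive_eq H _).
  rewrite /DAv /vec2 mxE /= /sqnorm2.
  rewrite /qf !mul0r !addr0.
  move: xn0; rewrite /sqnorm2; move: (x 0 0) (x 0 1) (u 0 0) (u 0 1) => a c d e xn0.
  rewrite -!expr2; field; exact: xn0.
- have H := pp_dmul (pp_dscal b (pp_dlin (x 0 0) (u 0 0) 0)) Hi.
  have -> : (fun h : R => Apot b (x + h *: u) 0 (Ordinal Hj)) =
    (fun h => (b * (x 0 0 + h * u 0 0)) *
      ((x 0 0 + h * u 0 0) * (x 0 0 + h * u 0 0) +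
       (x 0 1 + h * u 0 1) * (x 0 1 + h * u 0 1))^-1).
    apply/funext => h; rewrite /Apot /vec2 /sqnorm2 !mxE /=.
    by rewrite -!expr2.
  refine (is_derive_eq H _).
  rewrite /DAv /vec2 mxE /= /sqnorm2.
  rewrite /qf !mul0r !addr0.
  move: xn0; rewrite /sqnorm2; move: (x 0 0) (x 0 1) (u 0 0) (u 0 1) => a c d e xn0.
  rewrite -!expr2; field; exact: xn0.
Qed.
End D2.

Lemma is_derive_ext {R : realType} {V W : normedModType R} (f g : V -> W) (a v : V) (d : W) :
  (forall h, f h = g h) -> is_derive a v g d -> is_derive a v f d.
Proof. by move=> fg; rewrite (_ : f = g) //; apply/funext. Qed.

Section D3.
Context {R : realType}.
Variables (b w : R) (y : 'rV[R]_2) (t : R).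
Hypothesis wn0 : w != 0.

Lemma Dxt e : 'D_1 (xt b w y e) t =
  (- (sin (w * t) * w)) *: y + cos (w * t) *: (e - Apot b y).
Proof.
have H : is_derive t (1:R) (xt b w y e)
   ((- (sin (w * t) * w)) *: y + cos (w * t) *: (e - Apot b y)).
  apply: is_derive_mx => i j.
  apply: (@is_derive_ext _ _ _ _
    (fun x => cos (w * x) * y i j + sin (w * x) * (w^-1 * (e - Apot b y) i j))).
    by move=> h; rewrite /xt [in LHS]mxE [in LHS]mxE [in LHS]mxE mulrA.
  refine (is_derive_eq (pp_dadd (pp_dmul (pp_dcos w t) (pp_dcst (y i j) t))
     (pp_dmul (pp_dsin w t) (pp_dcst (w^-1 * (e - Apot b y) i j) t))) _).
  rewrite [in RHS]mxE [in RHS]mxE [in RHS]mxE.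
  move: ((e - Apot b y) i j) => z.
  field; exact: wn0.
by case: H.
Qed.

Lemma xt_lin e h v : xt b w y (h *: v + e) t =
  xt b w y e t + h *: ((sin (w * t) / w) *: v).
Proof.
apply/matrixP => i j; rewrite /xt !mxE.
move: (Apot b y i j) => z; ring.
Qed.

Lemma Jxt eta v : is_derive eta v (fun e => xt b w y e t) ((sin (w * t) / w) *: v).
Proof.
apply: is_derive_dir; apply: is_derive_mx => i j.
refine (@is_derive_ext _ _ _ _
  (fun h : R => xt b w y eta t i j + h * ((sin (w * t) / w) *: v) i j) _ _ _ _ _).
  by move=> h /=; rewrite xt_lin mxE [in X in _ + X = _]mxE.
exact: pp_dlin.
Qed.

Lemma Jxi eta v : sqnorm2 (xt b w y eta t) != 0 ->
  is_derive eta v (fun e => xit b w y e t)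
    (cos (w * t) *: v + DAv b (xt b w y eta t) ((sin (w * t) / w) *: v)).
Proof.
move=> xn0.
have -> : (fun e => xit b w y e t) = fun e =>
   ((- (sin (w * t) * w)) *: y + cos (w * t) *: (e - Apot b y))
   + Apot b (xt b w y e t).
  by apply/funext => e; rewrite /xit Dxt.
apply: is_derive_dir; apply: is_derive_mx => i j.
have -> : i = 0 by apply/val_inj; case: i => [[|]].
apply: (@is_derive_ext _ _ _ _
  (fun h : R => (((- (sin (w * t) * w)) *: y + cos (w * t) *: (eta - Apot b y)) 0 j
             + h * (cos (w * t) * v 0 j))
     + Apot b (xt b w y eta t + h *: ((sin (w * t) / w) *: v)) 0 j)).
  move=> h /=; rewrite xt_lin [in LHS]mxE; congr (_ + _).
  rewrite !mxE; ring.
rewrite [X in is_derive _ _ _ X]mxE [X in is_derive _ _ _ (X + _)]mxE.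
exact: (pp_dadd (pp_dlin _ _ 0) (dApot _ _ _ _ xn0)).
Qed.
End D3.

Lemma eig_det (F : fieldType) n (A : 'M[F]_n) a :
  eigenvalue A a = (\det (a%:M - A) == 0).
Proof.
apply/eigenvalueP/det0P=> [[v Av_av v_nz] | [v v_nz Av_av]]; exists v => //.
  by rewrite mulmxBr Av_av mul_mx_scalar subrr.
by apply/eqP; rewrite -mul_mx_scalar eq_sym -subr_eq0 -mulmxBr Av_av.
Qed.

Lemma jac_val {R : realType} (f : 'rV[R]_2 -> 'rV[R]_2) eta (D : 'I_2 -> 'rV[R]_2) :
  (forall j, is_derive eta (delta_mx 0 j) f (D j)) ->
  jac f eta = \matrix_(i, j) D j 0 i.
Proof. by move=> H; apply/matrixP => i j; rewrite !mxE; case: (H j) => _ ->. Qed.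

Lemma cplx_eq {R : realType} (a a' d d' B : R) : a = a' -> B * d = d' ->
  ((a%:C - ('i * B%:C) * d%:C) = a'%:C - 'i * d'%:C :> R[i])%C.
Proof. by move=> <- <-; ring. Qed.

Lemma cplx_form {R : realType} (a d : R) : ((a%:C - 'i * d%:C)%C = (Complex a (-d)) :> R[i]).
Proof. by simpc; congr Complex; ring. Qed.

Lemma cplx_eq0 {R : realType} (a d : R) : Complex a d = 0 -> a = 0 /\ d = 0.
Proof. by case. Qed.

Section S5.
Context {R : realType}.

Lemma sq_y (y : 'rV[R]_2) : y != 0 -> sqnorm2 y != 0.
Proof.
apply: contra => /eqP H.
have h0 : y 0 0 = 0 by move: H; rewrite /sqnorm2; nra.
have h1 : y 0 1 = 0 by move: H; rewrite /sqnorm2; nra.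
apply/eqP/matrixP => i j; rewrite mxE (ord1 i).
case: j => [[|[|//]]] Hj.
  by have -> : Ordinal Hj = 0 :> 'I_2 by apply/val_inj.
by have -> : Ordinal Hj = 1 :> 'I_2 by apply/val_inj.
Qed.

Lemma wedge_xt (b w t : R) (y eta : 'rV[R]_2) : sqnorm2 y != 0 -> w != 0 ->
  wedge y (xt b w y eta t) = sin (w * t) / w * (wedge y eta - b).
Proof.
move=> yn wn; rewrite /wedge /xt /Apot /vec2 !mxE /=.
move: yn; rewrite /sqnorm2 => yn.
by field; rewrite wn yn.
Qed.

Lemma xn0 (b w t : R) (y eta : 'rV[R]_2) : 0 < w -> y != 0 -> wedge y eta != b ->
  sqnorm2 (xt b w y eta t) != 0.
Proof.
move=> w0 yn wne; have wn : w != 0 by rewrite gt_eqF.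
have yq := sq_y y yn.
apply/negP => /eqP H.
have h0 : xt b w y eta t 0 0 = 0 by move: H; rewrite /sqnorm2; nra.
have h1 : xt b w y eta t 0 1 = 0 by move: H; rewrite /sqnorm2; nra.
have W0 : wedge y (xt b w y eta t) = 0 by rewrite /wedge h0 h1 !mulr0 subrr.
move: W0; rewrite wedge_xt // => /eqP; rewrite mulf_eq0 subr_eq0 (negbTE wne) orbF.
rewrite mulf_eq0 invr_eq0 (negbTE wn) orbF => /eqP s0.
have c2 : cos (w * t) ^+ 2 = 1 by rewrite -(cos2Dsin2 (w * t)) s0 expr0n addr0.
move: H; rewrite /sqnorm2 /xt s0 mul0r scale0r addr0 !mxE.
move/eqP: yq; rewrite /sqnorm2 => yq H; apply: yq.
by rewrite -H !exprMn c2 !mul1r.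
Qed.
End S5.

Theorem proposition3p3 (R : realType) (b w B : R) (y eta : 'rV[R]_2) (t : R) :
  0 < w -> 0 < B -> y != 0 -> wedge y eta != b -> 0 <= t ->
  let c := (cos (w * t))%:C%C in
  let s := sin (w * t) in
  let r2 := sqnorm2 (xt b w y eta t) in
  let Z := Zmat b w B y eta t in
  [/\ \det Z != 0,
      \det Z = (c - 'i%C * ((B / w * s)%:C)%C) ^+ 2 - ((b ^+ 2 / w ^+ 2 / r2 ^+ 2 * s ^+ 2)%:C)%C
    & forall mu : R[i], eigenvalue Z mu <->
        mu = c - 'i%C * ((B / w * s)%:C)%C + ((b / w / r2 * s)%:C)%C
        \/ mu = c - 'i%C * ((B / w * s)%:C)%C - ((b / w / r2 * s)%:C)%C].
Proof.
move=> w0 B0 yn wne t0 c s r2 Z; rewrite /c /s /r2 /Z => {c s r2 Z}.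
have wn : w != 0 by rewrite gt_eqF.
have xq := xn0 b w t y eta w0 yn wne.
set x := xt b w y eta t.
set k := sin (w * t) / w.
have JX : jac (fun e => xt b w y e t) eta = \matrix_(i, j) (k *: delta_mx 0 j) 0 i
  := jac_val _ _ (fun j => k *: delta_mx 0 j) (fun j => Jxt b w y t eta (delta_mx 0 j)).
have JXI : jac (fun e => xit b w y e t) eta =
   \matrix_(i, j) (cos (w * t) *: delta_mx 0 j + DAv b x (k *: delta_mx 0 j)) 0 i
  := jac_val _ _ (fun j => cos (w * t) *: delta_mx 0 j + DAv b x (k *: delta_mx 0 j)) (fun j => Jxi b w y t wn eta (delta_mx 0 j) xq).
pose P := 2 * b * k * x 0 0 * x 0 1 / sqnorm2 x ^+ 2.
pose Q := b * k * (x 0 1 ^+ 2 - x 0 0 ^+ 2) / sqnorm2 x ^+ 2.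
pose d := B / w * sin (w * t).
have xq0 : sqnorm2 x != 0 := xq.
clear xq; rename xq0 into xq.
clearbody x.
have Z00 : Zmat b w B y eta t 0 0 = ((cos (w * t) + P)%:C - 'i * d%:C)%C.
  rewrite /Zmat /cplxmx JX JXI !mxE /=.
  apply: cplx_eq.
    rewrite /P; move: xq; rewrite /sqnorm2 => xq'.
    by field.
  by rewrite /d /k; field.
have Z11 : Zmat b w B y eta t 1 1 = ((cos (w * t) - P)%:C - 'i * d%:C)%C.
  rewrite /Zmat /cplxmx JX JXI !mxE /=.
  apply: cplx_eq.
    rewrite /P; move: xq; rewrite /sqnorm2 => xq'.
    by field.
  by rewrite /d /k; field.
have Z01 : Zmat b w B y eta t 0 1 = (Q%:C - 'i * 0%:C)%C.
  rewrite /Zmat /cplxmx JX JXI !mxE /=.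
  apply: cplx_eq.
    rewrite /Q; move: xq; rewrite /sqnorm2 => xq'.
    by field.
  by rewrite mulr0 mulr0.
have Z10 : Zmat b w B y eta t 1 0 = (Q%:C - 'i * 0%:C)%C.
  rewrite /Zmat /cplxmx JX JXI !mxE /=.
  apply: cplx_eq.
    rewrite /Q; move: xq; rewrite /sqnorm2 => xq'.
    by field.
  by rewrite mulr0 mulr0.
pose beta := b / w / sqnorm2 x * sin (w * t).
have PQ : P ^+ 2 + Q ^+ 2 = b ^+ 2 / w ^+ 2 / sqnorm2 x ^+ 2 * sin (w * t) ^+ 2.
  rewrite /P /Q /k; move: xq; rewrite /sqnorm2 => xq'; by field; rewrite xq' wn.
have bE : beta ^+ 2 = P ^+ 2 + Q ^+ 2 by rewrite PQ /beta; field; rewrite ?xq ?wn.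
pose al := ((cos (w * t))%:C - 'i * d%:C)%C.
have detE : \det (Zmat b w B y eta t) = al ^+ 2 - ((P ^+ 2 + Q ^+ 2)%:C)%C.
  by rewrite det2 Z00 Z01 Z10 Z11 /al; ring.
split.
- rewrite detE -bE.
  have -> : al ^+ 2 - ((beta ^+ 2)%:C)%C = (al - beta%:C%C) * (al + beta%:C%C) by ring.
  have -> : al - beta%:C%C = ((cos (w * t) - beta)%:C - 'i * d%:C)%C by rewrite /al; ring.
  have -> : al + beta%:C%C = ((cos (w * t) + beta)%:C - 'i * d%:C)%C by rewrite /al; ring.
  rewrite !cplx_form.
  have key : forall e, Complex e (- d) != 0 -> True by [].
  have dn : d = 0 -> sin (w * t) = 0.
    move=> /eqP; rewrite /d !mulf_eq0 invr_eq0 (gt_eqF B0) (gt_eqF w0) /=.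
    by move/eqP.
  have c2 := cos2Dsin2 (w * t).
  apply: mulf_neq0; apply/negP => /eqP /cplx_eq0 [h1 h2];
    have s0 : sin (w * t) = 0 by apply: dn; rewrite -[d]opprK h2 oppr0.
  + move: h1 c2; rewrite /beta s0 mulr0 subr0 => ->; rewrite expr0n /= add0r => /eqP.
    by rewrite eq_sym oner_eq0.
  + move: h1 c2; rewrite /beta s0 mulr0 addr0 => ->; rewrite expr0n /= add0r => /eqP.
    by rewrite eq_sym oner_eq0.
- by rewrite detE PQ.
move: (Zmat b w B y eta t) Z00 Z01 Z10 Z11 => M Z00 Z01 Z10 Z11.
move=> mu; rewrite eig_det det2 !mxE Z00 Z01 Z10 Z11 /=.
rewrite (_ : _ - _ = (mu - al) ^+ 2 - ((P ^+ 2 + Q ^+ 2)%:C)%C); last by rewrite /al; ring.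
rewrite -bE (_ : _ - _ = (mu - (al + beta%:C%C)) * (mu - (al - beta%:C%C))); last by ring.
rewrite mulf_eq0 !subr_eq0 /al /d /beta.
by split => [/orP [] /eqP -> | [] ->]; [left | right | rewrite eqxx | rewrite eqxx orbT].
Qed.
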